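(* Let $Y\subset\mathbb{R}^n$ be open and let $\omega\colon Y\to\mathbb{R}^n$, $f\colon Y\to\mathbb{R}^n$, $F\colon Y\to\mathbb{R}$ and $f^{\mathrm{num}}\colon Y\times Y\to\mathbb{R}^n$ be arbitrary functions with $f^{\mathrm{num}}(u,u)=f(u)$ for all $u\in Y$. (No further relation between $\omega,f,F$ and no convexity is assumed.) Then the following are equivalent: (A) there exists $F^{\mathrm{num}}\colon Y\times Y\to\mathbb{R}$ with $F^{\mathrm{num}}(u,u)=F(u)$ for all $u\in Y$ such that for all $u_-,u_0,u_+\in Y$, $$\omega(u_0)\cdot\big(f^{\mathrm{num}}(u_0,u_+)-f^{\mathrm{num}}(u_-,u_0)\big)\ \ge\ F^{\mathrm{num}}(u_0,u_+)-F^{\mathrm{num}}(u_-,u_0);$$ (B) for all $u_-,u_+\in Y$, $$\big(\omega(u_+)-\omega(u_-)\big)\cdot f^{\mathrm{num}}(u_-,u_+)\ \le\ \big(\omega(u_+)\cdot f(u_+)-F(u_+)\big)-\big(\omega(u_-)\cdot f(u_-)-F(u_-)\big).$$ Moreover, there exists a consistent $F^{\mathrm{num}}$ for which (A) holds with equality for all triples if and only if (B) holds with equality for all pairs; and in that case $F^{\mathrm{num}}$ is uniquely determined by $$F^{\mathrm{num}}(u_-,u_+)=\{\{F\}\}+\{\{\omega\}\}\cdot f^{\mathrm{num}}(u_-,u_+)-\{\{\omega\cdot f\}\}.$$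
   Context: For a function $a$ on $Y$ and states $u_-,u_+$, write $a_\pm=a(u_\pm)$, the mean $\{\{a\}\}=\tfrac12(a_-+a_+)$ and the jump $[\![a]\!]=a_+-a_-$. *)

(* Defs.v *)
From HB Require Import structures.
From mathcomp Require Import all_boot all_order all_algebra.
From mathcomp Require Import all_classical all_reals all_analysis.
Set Implicit Arguments. Unset Strict Implicit. Unset Printing Implicit Defensive.
Import Order.TTheory GRing.Theory Num.Theory.
Local Open Scope ring_scope.

Definition dotp (R : realType) (n : nat) (a b : 'rV[R]_n) : R :=
  \sum_(i < n) a ord0 i * b ord0 i.

(* Main.v *)
Require Import Defs.
From HB Require Import structures.
From mathcomp Require Import all_boot all_order all_algebra.
From mathcomp Require Import all_classical all_reals all_analysis.
Import Order.TTheory GRing.Theory Num.Theory numFieldNormedType.Exports.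
Local Open Scope ring_scope.
Local Open Scope classical_set_scope.

From mathcomp Require Import lra.

Lemma dotpDl (R : realType) (n : nat) (a b c : 'rV[R]_n) :
  dotp (a + b) c = dotp a c + dotp b c.
Proof. by rewrite /dotp -big_split; apply: eq_bigr => i _; rewrite mxE mulrDl. Qed.
Lemma dotpBl (R : realType) (n : nat) (a b c : 'rV[R]_n) :
  dotp (a - b) c = dotp a c - dotp b c.
Proof. by rewrite /dotp -sumrB; apply: eq_bigr => i _; rewrite !mxE mulrBl. Qed.
Lemma dotpBr (R : realType) (n : nat) (a b c : 'rV[R]_n) :
  dotp a (b - c) = dotp a b - dotp a c.
Proof. by rewrite /dotp -sumrB; apply: eq_bigr => i _; rewrite !mxE mulrBr. Qed.
Lemma dotpZl (R : realType) (n : nat) (k : R) (a c : 'rV[R]_n) :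
  dotp (k *: a) c = k * dotp a c.
Proof. by rewrite /dotp mulr_sumr; apply: eq_bigr => i _; rewrite !mxE mulrA. Qed.

Theorem mainTheorem1 (R : realType) (n : nat) (Y : set 'rV[R]_n)
  (omega f : 'rV[R]_n -> 'rV[R]_n) (F : 'rV[R]_n -> R)
  (fnum : 'rV[R]_n -> 'rV[R]_n -> 'rV[R]_n) :
  open Y ->
  (forall u, Y u -> fnum u u = f u) ->
  (* (A) <-> (B) *)
  ((exists Fnum : 'rV[R]_n -> 'rV[R]_n -> R,
      (forall u, Y u -> Fnum u u = F u) /\
      (forall um u0 up, Y um -> Y u0 -> Y up ->
         dotp (omega u0) (fnum u0 up - fnum um u0)
           >= Fnum u0 up - Fnum um u0))
   <->
   (forall um up, Y um -> Y up ->
      dotp (omega up - omega um) (fnum um up)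
        <= (dotp (omega up) (f up) - F up) - (dotp (omega um) (f um) - F um)))
  /\
  (* equality versions *)
  ((exists Fnum : 'rV[R]_n -> 'rV[R]_n -> R,
      (forall u, Y u -> Fnum u u = F u) /\
      (forall um u0 up, Y um -> Y u0 -> Y up ->
         dotp (omega u0) (fnum u0 up - fnum um u0)
           = Fnum u0 up - Fnum um u0))
   <->
   (forall um up, Y um -> Y up ->
      dotp (omega up - omega um) (fnum um up)
        = (dotp (omega up) (f up) - F up) - (dotp (omega um) (f um) - F um)))
  /\
  (* uniqueness / explicit formula *)
  (forall Fnum : 'rV[R]_n -> 'rV[R]_n -> R,
      (forall u, Y u -> Fnum u u = F u) ->
      (forall um u0 up, Y um -> Y u0 -> Y up ->
         dotp (omega u0) (fnum u0 up - fnum um u0)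
           = Fnum u0 up - Fnum um u0) ->
      forall um up, Y um -> Y up ->
        Fnum um up = (F um + F up) / 2
                     + dotp (2^-1 *: (omega um + omega up)) (fnum um up)
                     - (dotp (omega um) (f um) + dotp (omega up) (f up)) / 2).
Proof.
move=> _ Hf.
set Fn := fun u v => F u + dotp (omega u) (fnum u v) - dotp (omega u) (f u).
have FnY : forall u, Y u -> Fn u u = F u.
  by move=> u Yu; rewrite /Fn Hf //; lra.
split; [|split].
- split.
  + move=> [Fnum [H1 H2]] um up Yum Yup.
    have := H2 um um up Yum Yum Yup; have := H2 um up up Yum Yup Yup.
    rewrite !Hf // !H1 // !dotpBr dotpBl; lra.
  + move=> HB; exists Fn; split => // um u0 up Yum Yu0 Yup.
    have := HB um u0 Yum Yu0; rewrite /Fn !dotpBr dotpBl; lra.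
- split.
  + move=> [Fnum [H1 H2]] um up Yum Yup.
    have := H2 um um up Yum Yum Yup; have := H2 um up up Yum Yup Yup.
    rewrite !Hf // !H1 // !dotpBr dotpBl; lra.
  + move=> HB; exists Fn; split => // um u0 up Yum Yu0 Yup.
    have := HB um u0 Yum Yu0; rewrite /Fn !dotpBr dotpBl; lra.
- move=> Fnum H1 H2 um up Yum Yup.
  have := H2 um um up Yum Yum Yup; have := H2 um up up Yum Yup Yup.
  rewrite !Hf // !H1 // !dotpBr dotpZl dotpDl; lra.
Qed.
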